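(* Let $0<p<1$ and let $P_1,\ldots,P_n,Q\in\mathbb{R}^n$ with $P_1,\ldots,P_n$ linearly independent. If $M\in p\text{-conv}\{P_1,\ldots,P_n,Q,0\}$, then there exist $P_{i_1},\ldots,P_{i_n}\in\{P_1,\ldots,P_n,Q\}$ such that $M\in p\text{-conv}\{P_{i_1},\ldots,P_{i_n},0\}$.
   Context: Let $0<p<1$. A set $B\subseteq \mathbb{R}^n$ is called $p$-convex if $\lambda x+\mu y\in B$ whenever $x,y\in B$ and $\lambda,\mu\ge 0$ with $\lambda^p+\mu^p=1$. For $A\subseteq \mathbb{R}^n$, the $p$-convex hull $p\text{-conv}(A)$ is the intersection of all $p$-convex subsets of $\mathbb{R}^n$ containing $A$. *)

(* Defs.v *)
From HB Require Import structures.
From mathcomp Require Import all_boot all_order all_algebra.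
From mathcomp Require Import all_classical all_reals all_analysis.
Set Implicit Arguments. Unset Strict Implicit. Unset Printing Implicit Defensive.
Import Order.TTheory GRing.Theory Num.Theory.
Local Open Scope classical_set_scope.
Local Open Scope ring_scope.

Definition pconvex (R : realType) (n : nat) (p : R) (B : set 'rV[R]_n) : Prop :=
  forall (x y : 'rV[R]_n) (l m : R), B x -> B y -> 0 <= l -> 0 <= m ->
    l `^ p + m `^ p = 1 -> B (l *: x + m *: y).

Definition pconv (R : realType) (n : nat) (p : R) (A : set 'rV[R]_n) : set 'rV[R]_n :=
  [set x | forall B : set 'rV[R]_n, pconvex p B -> A `<=` B -> B x].

(* Main.v *)
Require Import Defs.
From HB Require Import structures.
From mathcomp Require Import all_boot all_order all_algebra.
From mathcomp Require Import all_classical all_reals all_analysis.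
From mathcomp Require Import ring lra.
Import Order.TTheory GRing.Theory Num.Theory.
Local Open Scope classical_set_scope.
Local Open Scope ring_scope.
Section Pow.
Variable R : realType.
Variable p : R.
Hypothesis hp0 : 0 < p.
Hypothesis hp1 : p < 1.

Lemma pw0 : 0 `^ p = 0 :> R.
Proof. by rewrite powR0 // lt0r_neq0. Qed.

Lemma pw_le (x y : R) : 0 <= x -> x <= y -> x `^ p <= y `^ p.
Proof.
move=> x0 xy; apply: (ge0_ler_powR (ltW hp0)) => //; rewrite nnegrE //.
exact: le_trans xy.
Qed.

Lemma pw_le1 (x : R) : 0 <= x -> x <= 1 -> x `^ p <= 1.
Proof.
move=> x0 x1; have -> : (1:R) = 1 `^ p by rewrite powR1.
by apply: pw_le.
Qed.

Lemma pw_inv1 (x : R) : 0 <= x -> x `^ p <= 1 -> x <= 1.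
Proof.
move=> x0 h; rewrite leNgt; apply/negP => x1.
have : 1 `^ p < x `^ p.
  by apply: (gt0_ltr_powR hp0) => //; rewrite nnegrE.
by rewrite powR1 ltNge h.
Qed.

Lemma pw_root (s : R) : 0 <= s -> (s `^ p^-1) `^ p = s.
Proof. by move=> s0; rewrite -powRrM mulVf ?powRr1 // lt0r_neq0. Qed.

Lemma root_pw (s : R) : 0 <= s -> (s `^ p) `^ p^-1 = s.
Proof. by move=> s0; rewrite -powRrM mulfV ?powRr1 // lt0r_neq0. Qed.

Lemma pw_ge_id (a : R) : 0 <= a -> a <= 1 -> a <= a `^ p.
Proof.
move=> a0 a1; have [->|an0] := eqVneq a 0; first by rewrite pw0.
by apply: ger1_powR; [rewrite lt0r an0 a0 | exact: ltW].
Qed.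

Lemma pw_sub (u v : R) : 0 <= u -> 0 <= v -> (u + v) `^ p <= u `^ p + v `^ p.
Proof.
move=> u0 v0; have [s0|sn0] := eqVneq (u + v) 0.
  by rewrite s0 pw0 addr_ge0 // powR_ge0.
have sp : 0 < u + v by rewrite lt0r sn0 addr_ge0.
have a0 : 0 <= u / (u + v) by rewrite divr_ge0 // ltW.
have b0 : 0 <= v / (u + v) by rewrite divr_ge0 // ltW.
have a1 : u / (u + v) <= 1 by rewrite ler_pdivrMr // mul1r lerDl.
have b1 : v / (u + v) <= 1 by rewrite ler_pdivrMr // mul1r lerDr.
have eu : u = (u / (u + v)) * (u + v) by rewrite mulfVK.
have ev : v = (v / (u + v)) * (u + v) by rewrite mulfVK.
move: a0 b0 a1 b1; set a := u / (u + v); set b := v / (u + v) => a0 b0 a1 b1.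
rewrite [u in u `^ p + _]eu [v in _ + v `^ p]ev (powRM _ a0 (ltW sp)) (powRM _ b0 (ltW sp)).
rewrite -mulrDl -[leLHS]mul1r ler_wpM2r ?powR_ge0 //.
have -> : 1 = a + b by rewrite /a /b -mulrDl mulfV.
by apply: lerD; apply: pw_ge_id.
Qed.

Lemma pw_concave (t u v : R) : 0 <= t -> t <= 1 -> 0 <= u -> 0 <= v ->
  t * u `^ p + (1 - t) * v `^ p <= (t * u + (1 - t) * v) `^ p.
Proof.
move=> t0 t1 u0 v0.
have q1 : 1 <= p^-1 by rewrite invf_ge1 // ltW.
have := @convex_powR R p^-1 q1 (Itv01 t0 t1) (u `^ p) (v `^ p).
rewrite !inE /= !in_itv /= !powR_ge0 => /(_ isT isT).
rewrite !convRE /= !root_pw // => h.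
rewrite -[leLHS](pw_root); last by rewrite addr_ge0 // mulr_ge0 ?powR_ge0 ?subr_ge0.
apply: pw_le => //; first by rewrite powR_ge0.
Qed.

Lemma pw_inv (L : R) : 0 < L -> (L^-1) `^ p = (L `^ p)^-1.
Proof.
move=> L0; have Ln : L `^ p != 0 by rewrite lt0r_neq0 // powR_gt0.
have h : (L^-1) `^ p * L `^ p = 1.
  by rewrite -powRM ?invr_ge0 ?ltW // mulVf ?lt0r_neq0 // powR1.
by rewrite -[LHS]mulr1 -(mulfV Ln) mulrA h mul1r.
Qed.

Lemma pw_div (x y : R) : 0 <= x -> 0 < y -> (x / y) `^ p = x `^ p / y `^ p.
Proof. by move=> x0 y0; rewrite (powRM _ x0) ?invr_ge0 ?(ltW y0) // pw_inv. Qed.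

Variable n : nat.
Local Notation V := 'rV[R]_n.

Lemma star (B : set V) (y : V) (t : R) : pconvex p B -> B 0 -> B y ->
  0 <= t -> t <= 1 -> B (t *: y).
Proof.
move=> hB B0 By t0 t1.
have h1 : 0 <= 1 - t `^ p by rewrite subr_ge0 pw_le1.
have := hB y 0 t ((1 - t `^ p) `^ p^-1) By B0 t0 (powR_ge0 _ _).
by rewrite pw_root // addrC subrK scaler0 addr0; apply.
Qed.

Lemma sum_in (B : set V) : pconvex p B -> B 0 ->
  forall k (a : 'I_k -> V) (w : 'I_k -> R), (forall i, B (a i)) ->
  (forall i, 0 <= w i) -> \sum_i (w i) `^ p <= 1 -> B (\sum_i w i *: a i).
Proof.
move=> hB B0; elim=> [|k IH] a w Ba w0 hs; first by rewrite big_ord0.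
move: hs; rewrite !big_ord_recr /=.
set a' := fun i : 'I_k => a (widen_ord (leqnSn k) i).
set w' := fun i : 'I_k => w (widen_ord (leqnSn k) i).
rewrite -/(\sum_(i < k) (w' i) `^ p) -/(\sum_(i < k) w' i *: a' i).
set s := \sum_(i < k) (w' i) `^ p => hs.
have w'0 i : 0 <= w' i by apply: w0.
have Ba' i : B (a' i) by apply: Ba.
have s0 : 0 <= s by apply: sumr_ge0 => i _; apply: powR_ge0.
have [se|sn0] := eqVneq s 0.
  have wz i : w' i = 0.
    apply: (@powR_eq0_eq0 _ _ p).
    by apply: (psumr_eq0P (fun i _ => powR_ge0 (w' i) p) se).
  rewrite big1 ?add0r; last by move=> i _; rewrite wz scale0r.
  apply: star => //; apply: pw_inv1 => //.
  by move: hs; rewrite se add0r.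
have sp : 0 < s by rewrite lt0r sn0.
set L := s `^ p^-1.
have Lp : 0 < L by apply: powR_gt0.
have LL : L `^ p = s by apply: pw_root.
have Bx : B (\sum_i (w' i / L) *: a' i).
  apply: IH => //; first by move=> i; rewrite divr_ge0 // ltW.
  under eq_bigr => i _ do rewrite pw_div //.
  by rewrite -mulr_suml LL mulfV.
set wm := w ord_max.
have wm0 : 0 <= wm by apply: w0.
set T := s + wm `^ p.
have Tp : 0 < T by rewrite ltr_wpDr // powR_ge0.
set r := T `^ p^-1.
have rp : 0 < r by apply: powR_gt0.
have rr : r `^ p = T by apply: pw_root; apply: ltW.
have r1 : r <= 1 by apply: pw_inv1; [apply: ltW | rewrite rr].
have By : B ((L / r) *: \sum_i (w' i / L) *: a' i + (wm / r) *: a ord_max).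
  apply: (hB) => //; [exact: divr_ge0 (ltW Lp) (ltW rp) | exact: divr_ge0 wm0 (ltW rp) |].
  rewrite !pw_div //; last exact: ltW. by rewrite LL rr -mulrDl mulfV // lt0r_neq0.
have := @star B _ _ hB B0 By (ltW rp) r1.
rewrite scalerDr !scalerA mulrCA mulfV ?lt0r_neq0 // mulr1.
rewrite mulrCA mulfV ?lt0r_neq0 // mulr1 scaler_sumr.
under eq_bigr => i _ do rewrite scalerA mulrCA mulfV ?lt0r_neq0 // mulr1.
by [].
Qed.

Lemma pw_comb (a b u v : R) : 0 <= a -> 0 <= b -> 0 <= u -> 0 <= v ->
  (a * u + b * v) `^ p <= a `^ p * u `^ p + b `^ p * v `^ p.
Proof.
move=> a0 b0 u0 v0; rewrite -(powRM _ a0 u0) -(powRM _ b0 v0).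
by apply: pw_sub; apply: mulr_ge0.
Qed.

Variables (P : 'I_n -> V) (Q : V).

Definition S : set V := [set x | exists (l : 'I_n -> R) (m : R),
  (forall i, 0 <= l i) /\ 0 <= m /\ \sum_i (l i) `^ p + m `^ p <= 1 /\
  x = \sum_i l i *: P i + m *: Q].

Lemma S_pconvex : pconvex p S.
Proof.
move=> x y a b [l [m [l0 [m0 [hs ->]]]]] [l' [m' [l'0 [m'0 [hs' ->]]]]] a0 b0 hab.
exists (fun i => a * l i + b * l' i), (a * m + b * m'); split; last split; last split.
- by move=> i; rewrite addr_ge0 // mulr_ge0.
- by rewrite addr_ge0 // mulr_ge0.
- apply: (@le_trans _ _ (a `^ p * (\sum_i (l i) `^ p + m `^ p) +
                        b `^ p * (\sum_i (l' i) `^ p + m' `^ p))).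
    rewrite !mulrDr !mulr_sumr addrACA -big_split /=.
    apply: lerD; last exact: pw_comb.
    by apply: ler_sum => i _; apply: pw_comb.
  rewrite -hab; apply: lerD; rewrite -[leRHS]mulr1; apply: ler_wpM2l => //;
    exact: powR_ge0.
- have E : \sum_i (a * l i + b * l' i) *: P i =
           a *: \sum_i l i *: P i + b *: \sum_i l' i *: P i.
    rewrite !scaler_sumr -big_split; apply: eq_bigr => i _.
    by rewrite scalerDl !scalerA.
  by rewrite E scalerDl !scalerDr !scalerA addrACA.
Qed.

Lemma S_P i : S (P i).
Proof.
exists (fun j => (j == i)%:R), 0; split; last split; last split.
- by move=> j; rewrite ler0n.
- by [].
- rewrite (bigD1 i) //= eqxx powR1 big1 ?pw0 ?addr0 //.
  by move=> j /negbTE ->; rewrite pw0.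
- rewrite (bigD1 i) //= eqxx scale1r big1 ?scale0r ?addr0 //.
  by move=> j /negbTE ->; rewrite scale0r.
Qed.

Lemma S_Q : S Q.
Proof.
exists (fun j => 0), 1; split; last split; last split.
- by [].
- by [].
- by rewrite big1 ?powR1 ?add0r // => j _; rewrite pw0.
- by rewrite big1 ?scale1r ?add0r // => j _; rewrite scale0r.
Qed.

Lemma S_0 : S 0.
Proof.
exists (fun j => 0), 0; split; last split; last split.
- by [].
- by [].
- by rewrite big1 ?pw0 ?add0r // => j _; rewrite pw0.
- by rewrite big1 ?scale0r ?add0r // => j _; rewrite scale0r.
Qed.

Lemma repr (M : V) : pconv p [set x | (exists i, x = P i) \/ x = Q \/ x = 0] M -> S M.
Proof.
move=> hM; apply: hM; first exact: S_pconvex.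
by move=> x /= [[i ->]|[->|->]]; [exact: S_P | exact: S_Q | exact: S_0].
Qed.

Lemma basis : free [tuple P i | i < n] -> exists c : 'I_n -> R, Q = \sum_i c i *: P i.
Proof.
move=> hf; set X := [tuple P i | i < n].
have hX : <<X>>%VS = fullv.
  apply/eqP; rewrite eqEdim subvf dimvf /=.
  move/eqP: hf => ->; rewrite size_tuple.
  by rewrite [dim _]/dim /= mul1n.
have := @coord_span _ _ _ X Q; rewrite hX memvf => /(_ isT) eQ.
exists (fun i => coord X i Q); rewrite [LHS]eQ; apply: eq_bigr => i _.
by rewrite -tnth_nth tnth_mktuple.
Qed.

Lemma finish (M : V) (k : 'I_n -> R) (v : R) : (forall i, 0 <= k i) -> 0 <= v ->
  \sum_i (k i) `^ p + v `^ p <= 1 -> M = \sum_i k i *: P i + v *: Q ->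
  (v = 0 \/ exists j, k j = 0) ->
  exists f : 'I_n -> option 'I_n,
    injective f /\
    pconv p [set x | (exists i, x = (if f i is Some j then P j else Q)) \/ x = 0] M.
Proof.
move=> k0 v0 hs eM [v00|[j kj]].
  exists Some; split; first by move=> i i' [].
  move=> B hB hsub; have B0 : B 0 by apply: hsub; right.
  rewrite eM v00 scale0r addr0; apply: sum_in => //.
  - by move=> i; apply: hsub; left; exists i.
  - by move: hs; rewrite v00 pw0 addr0.
exists (fun i => if i == j then None else Some i); split.
  move=> i i'; case: (eqVneq i j) => [->|ij]; case: (eqVneq i' j) => [->|i'j] //.
  by case.
move=> B hB hsub; have B0 : B 0 by apply: hsub; right.
have -> : M = \sum_i (if i == j then v else k i) *: (if i == j then Q else P i).
  rewrite eM (bigD1 j) //= [in RHS](bigD1 j) //= !eqxx kj scale0r add0r addrC.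
  congr (_ + _); apply: eq_bigr => i /negbTE ->; by [].
apply: sum_in => //.
- move=> i; apply: hsub; left; exists i; by case: (i == j).
- by move=> i; case: (i == j).
- have -> : \sum_i (if i == j then v else k i) `^ p = \sum_i (k i) `^ p + v `^ p; last by [].
  rewrite (bigD1 j) //= [in RHS](bigD1 j) //= eqxx kj pw0 add0r addrC.
  congr (_ + _); apply: eq_bigr => i /negbTE ->; by [].
Qed.


Lemma main (M : V) : free [tuple P i | i < n] ->
  pconv p [set x | (exists i, x = P i) \/ x = Q \/ x = 0] M ->
  exists f : 'I_n -> option 'I_n,
    injective f /\
    pconv p [set x | (exists i, x = (if f i is Some j then P j else Q)) \/ x = 0] M.
Proof.
move=> hfree hM.
have [l [m [l0 [m0 [hs eM]]]]] := @repr M hM.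
have [c eQ] := @basis hfree.
pose K t i := l i + t * c i.
pose N t := m - t.
pose G t := \sum_i (K t i) `^ p + (N t) `^ p.
have eMt t : M = \sum_i K t i *: P i + N t *: Q.
  rewrite eM /K /N /=; apply/esym.
  under eq_bigr do rewrite scalerDl -scalerA.
  rewrite big_split /= -scaler_sumr -eQ scalerBl -addrA; congr (_ + _).
  by rewrite addrC subrK.
have G0 : G 0 <= 1.
  by rewrite /G /K /N; under eq_bigr do rewrite mul0r addr0; rewrite subr0.
have endp t : (forall i, 0 <= K t i) -> 0 <= N t -> G t <= 1 ->
    (N t = 0 \/ exists k, K t k = 0) ->
    exists f : 'I_n -> option 'I_n, injective f /\
    pconv p [set x | (exists i, x = (if f i is Some j then P j else Q)) \/ x = 0] M.
  by move=> h1 h2 h3 h4; apply: (@finish M (K t) (N t)).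
pose Pb := fun o : option 'I_n => if o is Some i then c i < 0 else true.
pose Fb := fun o : option 'I_n => if o is Some i then l i / - c i else m.
have [b [b0 [bm [Kb Zb]]]] : exists b, 0 <= b /\ b <= m /\ (forall i, 0 <= K b i) /\
    (N b = 0 \/ exists k, K b k = 0).
  case: (@arg_minP _ _ _ None Pb Fb isT) => ob Pob hmin.
  have b0 : 0 <= Fb ob.
    case: ob Pob {hmin} => [i /= ci|_ /=] //.
    by rewrite divr_ge0 // oppr_ge0 ltW.
  exists (Fb ob); split; [by []|split; [|split]].
  - exact: (hmin None isT).
  - move=> i; rewrite /K; case: (ltP (c i) 0) => ci.
      have := hmin (Some i) ci; rewrite /= ler_pdivlMr ?oppr_gt0 // mulrN => h.
      lra.
    by rewrite addr_ge0 // mulr_ge0.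
  - case: ob Pob {hmin b0} => [k /= ck|_]; last by left; rewrite /N /= subrr.
    by right; exists k; rewrite /K /= divrN mulNr divfK ?ltr0_neq0 // subrr.
have [[j cj]|nopos] : (exists j, 0 < c j) \/ (forall i, c i <= 0).
  case: (pselect (exists j, 0 < c j)) => [h|h]; [by left|right => i].
  by rewrite leNgt; apply/negP => ci; apply: h; exists i.
- case: (@arg_minP _ _ _ j (fun i => 0 < c i) (fun i => l i / c i) cj) => k ck hk.
  set a := - (l k / c k).
  have a0 : a <= 0 by rewrite /a oppr_le0 divr_ge0 // ltW.
  have Ka i : 0 <= K a i.
    rewrite /K; case: (ltP 0 (c i)) => ci.
      have := hk i ci; rewrite ler_pdivlMr // => h.
      rewrite /a mulNr; lra.
    by rewrite addr_ge0 // mulr_le0.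
  have Na : 0 <= N a by rewrite /N; lra.
  have Zk : K a k = 0 by rewrite /K /a mulNr divfK ?lt0r_neq0 // subrr.
  have [ab|abn] := eqVneq (b - a) 0.
    have a00 : a = 0 by move/eqP: ab; lra.
    apply: (endp a) => //; last by right; exists k.
    by rewrite a00.
  have hba : 0 < b - a by rewrite lt0r abn subr_ge0 (le_trans a0 b0).
  set th := b / (b - a).
  have th0 : 0 <= th by rewrite divr_ge0 // ltW.
  have th1 : th <= 1 by rewrite /th ler_pdivrMr // mul1r; lra.
  have hth : th * a + (1 - th) * b = 0 by rewrite /th; field.
  have affK i : K 0 i = th * K a i + (1 - th) * K b i.
    rewrite /K; transitivity (l i * (th + (1 - th)) + (th * a + (1 - th) * b) * c i).
      by rewrite hth subrKC mulr1 !mul0r addr0.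
    ring.
  have affN : N 0 = th * N a + (1 - th) * N b.
    rewrite /N; transitivity (m * (th + (1 - th)) - (th * a + (1 - th) * b)).
      by rewrite hth subrKC mulr1 !subr0.
    ring.
  have Nb : 0 <= N b by rewrite /N subr_ge0.
  have hconv : th * G a + (1 - th) * G b <= G 0.
    rewrite /G !mulrDr !mulr_sumr addrACA -big_split /=.
    apply: lerD.
      by apply: ler_sum => i _; rewrite affK; apply: pw_concave.
    by rewrite affN; apply: pw_concave.
  case: (leP (G a) (G b)) => hG.
    apply: (endp a) => //; last by right; exists k.
    apply: le_trans G0; apply: le_trans hconv; nra.
  apply: (endp b) => //.
  apply: le_trans G0; apply: le_trans hconv; nra.
- apply: (endp b) => //; first by rewrite /N subr_ge0.
  apply: le_trans G0; rewrite /G; apply: lerD.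
    apply: ler_sum => i _; apply: pw_le => //.
    by rewrite /K mul0r addr0 gerDl mulr_ge0_le0.
  by apply: pw_le; rewrite /N ?subr0 ?gerBl // subr_ge0.
Qed.

End Pow.

Theorem lemma4 (R : realType) (n : nat) (p : R) (P : 'I_n -> 'rV[R]_n)
    (Q M : 'rV[R]_n) :
  0 < p < 1 ->
  free [tuple P i | i < n] ->
  pconv p [set x | (exists i, x = P i) \/ x = Q \/ x = 0] M ->
  exists f : 'I_n -> option 'I_n,
    injective f /\
    pconv p [set x | (exists i, x = (if f i is Some j then P j else Q)) \/ x = 0] M.
Proof.
move=> /andP[hp0 hp1]; exact: main.
Qed.
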